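(* Let $b \ge 2$ be an integer, let $m = 2b+1$, and let $f(x) = x^{2b+1} + x^{b+1} + x^{b} + x + 1 \in \mathbb{F}_2[x]$. There is a fixed, input-independent straight-line program using no AND operations and exactly $6b+1 = 3m-2$ two-input XOR operations, of XOR depth $3$ (i.e. time delay $3T_X$), which, on input the coefficient bits $d_0,\dots,d_{2m-2}$ of an arbitrary polynomial $D(x)=\sum_{i=0}^{2m-2} d_i x^i \in \mathbb{F}_2[x]$ of degree at most $2m-2$, outputs the $m$ coefficient bits of the remainder of $D$ upon division by $f$ (the unique polynomial of degree less than $m$ congruent to $D$ modulo $f$).
   Context: A straight-line program (bit-parallel circuit) over $\mathbb{F}_2$ here is a sequence of gates, each computing the XOR (sum in $\mathbb{F}_2$) of two values that are either input bits or outputs of earlier gates; each output bit is an input bit or a gate output. The number of XOR operations is the number of gates. $T_X$ denotes the delay of one 2-input XOR gate, and the time delay of the program is $T_X$ times the maximum number of gates on any path from an input to an output. *)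

(* Defs.v *)
From HB Require Import structures.
From mathcomp Require Import all_boot all_order all_algebra.
Set Implicit Arguments. Unset Strict Implicit. Unset Printing Implicit Defensive.
Import GRing.Theory.
Local Open Scope ring_scope.

(* A straight-line program (bit-parallel XOR circuit) over F_2 with [n] input
   bits.  Wires are numbered: wires 0..n-1 are the inputs, wire n+j is the
   output of gate j.  Gate j is a pair (a, c) of wire indices and computes
   wire a XOR wire c; it may only use earlier wires (a, c < n + j). *)
Record slp := SLP { slp_gates : seq (nat * nat); slp_outs : seq nat }.

Definition slp_wf (n : nat) (P : slp) : bool :=
  [&& all (fun j => ((nth (0,0)%N (slp_gates P) j).1 < n + j)%N &&
                    ((nth (0,0)%N (slp_gates P) j).2 < n + j)%N)
          (iota 0 (size (slp_gates P)))
    & all (fun o => (o < n + size (slp_gates P))%N) (slp_outs P)].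

Definition slp_xors (P : slp) : nat := size (slp_gates P).

Definition slp_wires (inp : seq 'F_2) (gs : seq (nat * nat)) : seq 'F_2 :=
  foldl (fun w g => rcons w (nth 0 w g.1 + nth 0 w g.2)) inp gs.

Definition slp_wire_depths (n : nat) (gs : seq (nat * nat)) : seq nat :=
  foldl (fun w g => rcons w (maxn (nth 0%N w g.1) (nth 0%N w g.2)).+1)
        (nseq n 0%N) gs.

(* time delay in units of T_X: maximal number of gates on a path from an
   input to an output *)
Definition slp_depth (n : nat) (P : slp) : nat :=
  \max_(o <- slp_outs P) nth 0%N (slp_wire_depths n (slp_gates P)) o.

Definition slp_out (P : slp) (inp : seq 'F_2) (k : nat) : 'F_2 :=
  nth 0 (slp_wires inp (slp_gates P)) (nth 0%N (slp_outs P) k).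

Definition pentanomial (b : nat) : {poly 'F_2} :=
  'X^(2 * b + 1) + 'X^(b + 1) + 'X^b + 'X + 1.

(* Main.v *)
Require Import Defs.
From HB Require Import structures.
From mathcomp Require Import all_boot all_order all_algebra.
From mathcomp Require Import zify ring.
Import GRing.Theory.
Local Open Scope ring_scope.

Lemma foldl_layer (A : Type) (x0 : A) (op : A -> A -> A) (w : seq A) gs :
  all (fun g : nat * nat => (g.1 < size w)%N && (g.2 < size w)%N) gs ->
  foldl (fun w g => rcons w (op (nth x0 w g.1) (nth x0 w g.2))) w gs =
  w ++ map (fun g => op (nth x0 w g.1) (nth x0 w g.2)) gs.
Proof.
elim: gs w => [|g gs IH] w /=; first by rewrite cats0.
case/andP=> /andP[h1 h2] hs.
rewrite IH; last first.
  apply: sub_all hs => g' /andP[a c]; rewrite size_rcons; apply/andP; split; lia.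
rewrite -cats1 -catA /=; congr (_ ++ _ :: _).
apply/eq_in_map => g' /(allP hs) /andP[a c]; by rewrite !nth_cat a c.
Qed.

Lemma wf_layer n (G1 G2 : seq (nat * nat)) :
  all (fun j => ((nth (0,0)%N G1 j).1 < n + j)%N && ((nth (0,0)%N G1 j).2 < n + j)%N)
      (iota 0 (size G1)) ->
  all (fun g : nat * nat => (g.1 < n + size G1)%N && (g.2 < n + size G1)%N) G2 ->
  all (fun j => ((nth (0,0)%N (G1 ++ G2) j).1 < n + j)%N && ((nth (0,0)%N (G1 ++ G2) j).2 < n + j)%N)
      (iota 0 (size (G1 ++ G2))).
Proof.
move=> h1 h2; apply/allP => j; rewrite mem_iota size_cat add0n => /andP[_ hj].
rewrite nth_cat; case: ifP => hj1.
  by move/allP: h1 => /(_ j); rewrite mem_iota hj1 => /(_ isT).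
have hj2 : (j - size G1 < size G2)%N by lia.
move/allP: h2 => /(_ _ (mem_nth (0,0)%N hj2)) /andP[a c]; have hge : (size G1 <= j)%N by rewrite leqNgt hj1.
apply/andP; split; [apply: (leq_trans a)|apply: (leq_trans c)]; by rewrite leq_add2l.
Qed.

Definition uw (b j : nat) : nat := if (j < 2*b-1)%N then (4*b+1+j)%N else (4*b)%N.
Definition L1 (b : nat) : seq (nat * nat) :=
  map (fun j => (2*b+1+j, 2*b+2+j)%N) (iota 0 (2*b-1)) ++ [:: (b, 4*b)%N].
Definition L2 (b : nat) : seq (nat * nat) :=
  map (fun k => (uw b k, uw b (b+k+1))) (iota 0 (b-1)) ++
  map (fun k => (k+1, uw b (b+k))%N) (iota 0 (b-1)) ++
  [:: (2*b+1, uw b b)%N; (6*b, uw b (b-1))%N; (2*b, uw b (b-1))%N].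
Definition L3 (b : nat) : seq (nat * nat) :=
  map (fun k => (b+k+1, 6*b+1+k)%N) (iota 0 (b-1)) ++
  map (fun k => (6*b+1+k, 7*b+k)%N) (iota 0 (b-1)) ++
  [:: (0, 8*b-1)%N; (8*b-1, 8*b)%N].
Definition outw (b k : nat) : nat :=
  if k == 0%N then (10*b)%N else if (k < b)%N then (9*b+k)%N
  else if k == b then (10*b+1)%N else if (k < 2*b)%N then (7*b+1+k)%N
  else (8*b+1)%N.
Definition P (b : nat) : slp := SLP (L1 b ++ L2 b ++ L3 b) (map (outw b) (iota 0 (2*b+1))).

Lemma all_iota0 (p : pred nat) n : (forall j : nat, (j < n)%N -> p j) -> all p (iota 0 n).
Proof. move=> h; apply/allP => j; rewrite mem_iota => /andP[_ hj]; exact: h. Qed.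

Lemma size_L1 b : (2 <= b)%N -> size (L1 b) = (2*b)%N.
Proof. move=> hb; rewrite /L1 size_cat size_map size_iota /=; lia. Qed.
Lemma size_L2 b : size (L2 b) = (2*(b-1)+3)%N.
Proof. rewrite /L2 !size_cat !size_map size_iota /=; lia. Qed.
Lemma size_L3 b : size (L3 b) = (2*(b-1)+2)%N.
Proof. rewrite /L3 !size_cat !size_map size_iota /=; lia. Qed.

Lemma uw_lt b j : (2 <= b)%N -> (uw b j < 6*b)%N.
Proof. rewrite /uw; case: ifP; lia. Qed.

Lemma all_L1 b : (2 <= b)%N -> all (fun g : nat * nat => (g.1 < 4*b+1)%N && (g.2 < 4*b+1)%N) (L1 b).
Proof.
move=> hb; rewrite /L1 all_cat /= andbT all_map; apply/andP; split; last by apply/andP; split; lia.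
apply: all_iota0 => j hj /=; apply/andP; split; lia.
Qed.

Lemma all_L2 b : (2 <= b)%N -> all (fun g : nat * nat => (g.1 < 6*b+1)%N && (g.2 < 6*b+1)%N) (L2 b).
Proof.
move=> hb; have U := uw_lt b.
rewrite /L2 !all_cat !all_map /=; apply/and3P; split.
- apply: all_iota0 => j hj /=. have := U j hb; have := U (b+j+1)%N hb. move=> h1 h2. apply/andP; split; lia.
- apply: all_iota0 => j hj /=. have := U (b+j)%N hb. move=> h1; apply/andP; split; lia.
- have := U b hb; have := U (b-1)%N hb; move=> h1 h2. apply/and4P; split => //; apply/andP; split; lia.
Qed.

Lemma all_L3 b : (2 <= b)%N -> all (fun g : nat * nat => (g.1 < 8*b+2)%N && (g.2 < 8*b+2)%N) (L3 b).
Proof.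
move=> hb; rewrite /L3 !all_cat !all_map /=; apply/and3P; split.
- apply: all_iota0 => j hj /=; apply/andP; split; lia.
- apply: all_iota0 => j hj /=; apply/andP; split; lia.
- apply/and3P; split => //; apply/andP; split; lia.
Qed.

Lemma size_gates b : (2 <= b)%N -> size (L1 b ++ L2 b ++ L3 b) = (6*b+1)%N.
Proof. move=> hb; rewrite (size_cat (L1 b)) (size_cat (L2 b)) size_L1 // size_L2 size_L3; lia. Qed.

Lemma wf_P b : (2 <= b)%N -> slp_wf (4*b+1) (P b).
Proof.
move=> hb; rewrite /slp_wf /P /=; apply/andP; split; last first.
  rewrite size_gates // all_map; apply: all_iota0 => k hk /=.
  rewrite /outw; repeat case: ifP => ?; lia.
rewrite catA; apply: wf_layer; last first.
  rewrite (size_cat (L1 b)) size_L1 // size_L2.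
  move: (all_L3 b hb); apply: sub_all => g /andP[h1 h2]; apply/andP; split; lia.
apply: wf_layer; last first.
  rewrite size_L1 //.
  move: (all_L2 b hb); apply: sub_all => g /andP[h1 h2]; apply/andP; split; lia.
rewrite -[L1 b]cat0s; apply: wf_layer => //.
move: (all_L1 b hb); apply: sub_all => g /andP[h1 h2]; apply/andP; split; lia.
Qed.

Ltac dec := repeat match goal with |- context [if ?c then _ else _] =>
  let E := fresh "E" in
  first [ assert (E : c = true) by lia | assert (E : c = false) by lia ]; rewrite E; clear E end.

Definition V (w : seq 'F_2) (g : nat * nat) : 'F_2 := nth 0 w g.1 + nth 0 w g.2.

Lemma nth_mi (A : Type) (x0 : A) (f : nat -> A) c r p :
  nth x0 (map f (iota 0 c) ++ r) p = if (p < c)%N then f p else nth x0 r (p - c).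
Proof.
rewrite nth_cat size_map size_iota; case: ifP => h //.
by rewrite (nth_map 0%N) ?size_iota // nth_iota.
Qed.

Lemma nth1 (A : Type) (x0 x : A) q : nth x0 [:: x] q = if q == 0%N then x else x0.
Proof. by case: q => [|[|q]]. Qed.
Lemma nth2 (A : Type) (x0 x y : A) q :
  nth x0 [:: x; y] q = if q == 0%N then x else if q == 1%N then y else x0.
Proof. by case: q => [|[|[|q]]]. Qed.
Lemma nth3 (A : Type) (x0 x y z : A) q :
  nth x0 [:: x; y; z] q = if q == 0%N then x else if q == 1%N then y else if q == 2%N then z else x0.
Proof. by case: q => [|[|[|[|q]]]]. Qed.

Lemma nth_L1 b p : nth (0,0)%N (L1 b) p =
  if (p < 2*b-1)%N then (2*b+1+p, 2*b+2+p)%N else nth (0,0)%N [:: (b, 4*b)%N] (p - (2*b-1)).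
Proof. by rewrite /L1 nth_mi. Qed.
Lemma nth_L2 b p : nth (0,0)%N (L2 b) p =
  if (p < b-1)%N then (uw b p, uw b (b+p+1)) else
  if (p - (b-1) < b-1)%N then ((p - (b-1))+1, uw b (b+(p-(b-1))))%N else
  nth (0,0)%N [:: (2*b+1, uw b b)%N; (6*b, uw b (b-1))%N; (2*b, uw b (b-1))%N] (p - (b-1) - (b-1)).
Proof. by rewrite /L2 !nth_mi. Qed.
Lemma nth_L3 b p : nth (0,0)%N (L3 b) p =
  if (p < b-1)%N then (b+p+1, 6*b+1+p)%N else
  if (p - (b-1) < b-1)%N then (6*b+1+(p-(b-1)), 7*b+(p-(b-1)))%N else
  nth (0,0)%N [:: (0, 8*b-1)%N; (8*b-1, 8*b)%N] (p - (b-1) - (b-1)).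
Proof. by rewrite /L3 !nth_mi. Qed.

Lemma nth_cm (T : Type) (x0 : T) (w : seq T) f (l : seq (nat * nat)) i :
  nth x0 (w ++ map f l) i = if (i < size w)%N then nth x0 w i
    else if (i < size w + size l)%N then f (nth (0,0)%N l (i - size w)) else x0.
Proof.
rewrite nth_cat; case: ifP => h1 //; case: ifP => h2.
  by rewrite (nth_map (0,0)%N) //; lia.
by rewrite nth_default // size_map; lia.
Qed.

Section Wires.
Variables (b : nat) (hb : (2 <= b)%N) (s : seq 'F_2) (hs : size s = (4*b+1)%N).

Definition W1 := s ++ map (V s) (L1 b).
Definition W2 := W1 ++ map (V W1) (L2 b).
Definition W3 := W2 ++ map (V W2) (L3 b).

Lemma size_W1 : size W1 = (6*b+1)%N.
Proof. rewrite /W1 size_cat size_map size_L1 // hs; lia. Qed.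
Lemma size_W2 : size W2 = (8*b+2)%N.
Proof. rewrite /W2 size_cat size_map size_L2 size_W1; lia. Qed.

Lemma wires_eq : slp_wires s (L1 b ++ L2 b ++ L3 b) = W3.
Proof.
rewrite /slp_wires (foldl_cat _ _ (L1 b)) (foldl_cat _ _ (L2 b)).
rewrite [foldl _ s _](@foldl_layer _ 0 +%R); last first.
  move: (all_L1 b hb); apply: sub_all => g /andP[h1 h2]; rewrite hs; apply/andP; split; lia.
rewrite -/W1 [foldl _ W1 _](@foldl_layer _ 0 +%R); last first.
  move: (all_L2 b hb); apply: sub_all => g /andP[h1 h2]; rewrite size_W1; apply/andP; split; lia.
rewrite -/W2 (@foldl_layer _ 0 +%R) //.
move: (all_L3 b hb); apply: sub_all => g /andP[h1 h2]; rewrite size_W2; apply/andP; split; lia.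
Qed.

Lemma nth_W3 i : nth 0 W3 i = if (i < 8*b+2)%N then nth 0 W2 i
    else if (i < 10*b+2)%N then V W2 (nth (0,0)%N (L3 b) (i - (8*b+2))) else 0.
Proof. by rewrite /W3 nth_cm size_W2 size_L3 (_ : (8*b+2 + (2*(b-1)+2) = 10*b+2)%N) //; lia. Qed.

Lemma nth_W2 i : nth 0 W2 i = if (i < 6*b+1)%N then nth 0 W1 i
    else if (i < 8*b+2)%N then V W1 (nth (0,0)%N (L2 b) (i - (6*b+1))) else 0.
Proof. by rewrite /W2 nth_cm size_W1 size_L2 (_ : (6*b+1 + (2*(b-1)+3) = 8*b+2)%N) //; lia. Qed.

Lemma nth_W1 i : nth 0 W1 i = if (i < 4*b+1)%N then nth 0 s i
    else if (i < 6*b+1)%N then V s (nth (0,0)%N (L1 b) (i - (4*b+1))) else 0.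
Proof. by rewrite /W1 nth_cm hs size_L1 // (_ : (4*b+1 + 2*b = 6*b+1)%N) //; lia. Qed.

End Wires.

Definition Vd (w : seq nat) (g : nat * nat) : nat := (maxn (nth 0%N w g.1) (nth 0%N w g.2)).+1.

Lemma all_nth_le (w : seq nat) c i : all (fun x => x <= c)%N w -> (nth 0%N w i <= c)%N.
Proof.
move=> h; case: (ltnP i (size w)) => hi; first by move/allP: h; apply; exact: mem_nth.
by rewrite nth_default.
Qed.

Section Depth.
Variables (b : nat) (hb : (2 <= b)%N).
Definition D0 := nseq (4*b+1) 0%N.
Definition D1 := D0 ++ map (Vd D0) (L1 b).
Definition D2 := D1 ++ map (Vd D1) (L2 b).
Definition D3 := D2 ++ map (Vd D2) (L3 b).

Lemma size_D1 : size D1 = (6*b+1)%N.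
Proof. rewrite /D1 size_cat size_map size_L1 // size_nseq; lia. Qed.
Lemma size_D2 : size D2 = (8*b+2)%N.
Proof. rewrite /D2 size_cat size_map size_L2 size_D1; lia. Qed.

Lemma depths_eq : slp_wire_depths (4*b+1) (L1 b ++ L2 b ++ L3 b) = D3.
Proof.
rewrite /slp_wire_depths (foldl_cat _ _ (L1 b)) (foldl_cat _ _ (L2 b)).
rewrite [foldl _ (nseq _ _) _](@foldl_layer _ 0%N (fun a c => (maxn a c).+1)); last first.
  move: (all_L1 b hb); apply: sub_all => g /andP[h1 h2]; rewrite size_nseq; apply/andP; split; lia.
rewrite -/D0 -/D1 [foldl _ D1 _](@foldl_layer _ 0%N (fun a c => (maxn a c).+1)); last first.
  move: (all_L2 b hb); apply: sub_all => g /andP[h1 h2]; rewrite size_D1; apply/andP; split; lia.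
rewrite -/D2 (@foldl_layer _ 0%N (fun a c => (maxn a c).+1)) //.
move: (all_L3 b hb); apply: sub_all => g /andP[h1 h2]; rewrite size_D2; apply/andP; split; lia.
Qed.

Lemma D1_le : all (fun x => x <= 1)%N D1.
Proof.
rewrite /D1 all_cat; apply/andP; split; first by apply/allP => x /nseqP [-> _].
rewrite all_map; apply/allP => g _ /=; rewrite /Vd !nth_nseq; by case: ifP; case: ifP.
Qed.
Lemma D2_le : all (fun x => x <= 2)%N D2.
Proof.
rewrite /D2 all_cat; apply/andP; split.
  by move: D1_le; apply: sub_all => x /= h; apply: leq_trans h _.
rewrite all_map; apply/allP => g _ /=; rewrite /Vd ltnS geq_max.
by rewrite !(all_nth_le _ _ _ D1_le).
Qed.
Lemma D3_le : all (fun x => x <= 3)%N D3.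
Proof.
rewrite /D3 all_cat; apply/andP; split.
  by move: D2_le; apply: sub_all => x /= h; apply: leq_trans h _.
rewrite all_map; apply/allP => g _ /=; rewrite /Vd ltnS geq_max.
by rewrite !(all_nth_le _ _ _ D2_le).
Qed.

Lemma D3_r0 : nth 0%N D3 (10*b) = 3%N.
Proof.
rewrite /D3 nth_cm size_D2 size_L3; dec.
rewrite nth_L3; dec; rewrite nth2; dec; rewrite /Vd /=.
have e : nth 0%N D2 (8*b-1) = 2%N.
  rewrite /D2 nth_cm size_D1 size_L2; dec.
  rewrite nth_L2; dec; rewrite nth3; dec; rewrite /Vd /= /uw; dec.
  have e1 : nth 0%N D1 (4*b+1+b) = 1%N.
    rewrite /D1 nth_cm size_nseq size_L1 //; dec; by rewrite /Vd /D0 !nth_nseq !if_same.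
  by rewrite e1 (maxn_idPr _) // (all_nth_le _ _ _ D1_le).
by rewrite e (maxn_idPr _) // (all_nth_le _ _ _ D2_le).
Qed.
End Depth.

Lemma two0F : (2%:R : 'F_2) = 0.
Proof. by apply: val_inj. Qed.
Lemma two0 : (2%:R : {poly 'F_2}) = 0.
Proof. by rewrite -polyC_natr two0F polyC0. Qed.

Lemma size_add_le (p q : {poly 'F_2}) n : (size p <= n)%N -> (size q <= n)%N -> (size (p + q)%R <= n)%N.
Proof. move=> h1 h2; apply: (leq_trans (size_polyD _ _)); by rewrite geq_max h1 h2. Qed.

Section Poly.
Variables (b : nat) (hb : (2 <= b)%N) (s : seq 'F_2) (hs : size s = (4*b+1)%N).
Local Notation m := (2*b+1)%N.
Definition Dp : {poly 'F_2} := \poly_(i < 4*b+1) nth 0 s i.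
Definition gp : {poly 'F_2} := 'X^(b+1) + 'X^b + 'X + 1.
Definition Hp := drop_poly m Dp.
Definition Ap := take_poly m (Hp * gp).
Definition Bp := drop_poly m (Hp * gp).
Definition Rp := take_poly m Dp + Ap + Bp * gp.

Lemma coef_Dp i : Dp`_i = nth 0 s i.
Proof. rewrite /Dp coef_poly; case: ifP => // h; rewrite nth_default // hs; lia. Qed.

Lemma size_gp : (size gp <= b+2)%N.
Proof.
rewrite /gp; apply: size_add_le; last by rewrite size_poly1; lia.
apply: size_add_le; last by rewrite size_polyX; lia.
by apply: size_add_le; rewrite size_polyXn; lia.
Qed.

Lemma pent_eq : pentanomial b = 'X^m + gp.
Proof. by rewrite /pentanomial /gp !addrA. Qed.

Lemma size_pent : size (pentanomial b) = m.+1.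
Proof. rewrite pent_eq size_polyDl size_polyXn //; apply: (leq_ltn_trans size_gp); lia. Qed.

Lemma size_Rp : (size Rp <= m)%N.
Proof.
rewrite /Rp; apply: size_add_le; first by apply: size_add_le; apply: size_take_poly.
apply: (leq_trans (size_polyMleq _ _)).
have hD : (size Dp <= 4*b+1)%N by apply: size_poly.
have hH : (size Hp <= 2*b)%N by rewrite /Hp size_drop_poly; lia.
have hHg : (size (Hp * gp)%R <= 3*b+1)%N.
  apply: (leq_trans (size_polyMleq _ _)); have := size_gp; lia.
have hB : (size Bp <= b)%N by rewrite /Bp size_drop_poly; lia.
have := size_gp; lia.
Qed.

Lemma modp_Rp : Dp %% pentanomial b = Rp.
Proof.
have Eq : Dp = (Hp + Bp) * pentanomial b + Rp.
  have hHg : Hp * gp = Ap + Bp * 'X^m by rewrite poly_take_drop.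
  have hD : Dp = take_poly m Dp + Hp * 'X^m by rewrite poly_take_drop.
  have E2 : (Ap + Bp * 'X^m + Bp * gp) *+ 2 = 0 by rewrite -mulr_natr two0 mulr0.
  rewrite pent_eq {1}hD -[LHS]addr0 -E2 /Rp mulrDl (mulrDr Hp) hHg.
  rewrite -/Ap -/Hp. ring.
have Sz : (size Rp < size (pentanomial b))%N by rewrite size_pent ltnS size_Rp.
by case: (divp_modpP Eq Sz) => _ <-.
Qed.

Lemma coef_gp (p : {poly 'F_2}) k : (p * gp)`_k =
  (if (k < b+1)%N then 0 else p`_(k - (b+1))) + (if (k < b)%N then 0 else p`_(k - b))
  + (if k == 0%N then 0 else p`_k.-1) + p`_k.
Proof. by rewrite /gp !mulrDr mulr1 !coefD !coefMXn coefMX. Qed.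

Lemma coef_Rp k : (k < m)%N -> Rp`_k = nth 0 s k + (Hp * gp)`_k + (Bp * gp)`_k.
Proof. by move=> hk; rewrite /Rp !coefD coef_take_poly hk coef_Dp /Ap coef_take_poly hk. Qed.

Lemma coef_Hp j : Hp`_j = nth 0 s (j + m).
Proof. by rewrite /Hp coef_drop_poly coef_Dp. Qed.
Lemma coef_Bp t : Bp`_t = (Hp * gp)`_(t + m).
Proof. by rewrite /Bp coef_drop_poly. Qed.
End Poly.

Lemma F2c (x : 'F_2) : x = 0 \/ x = 1.
Proof. have := ltn_ord x. case: x => m Hm. simpl. case: m Hm => [|[|n]] Hm _.
- by left; apply: val_inj.
- by right; apply: val_inj.
- by [].
Qed.

Ltac expand hb hs := repeat first [ progress dec
  | rewrite (@nth_W3 _ hb _ hs) | rewrite (@nth_W2 _ hb _ hs) | rewrite (@nth_W1 _ hb _ hs)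
  | rewrite nth_L3 | rewrite nth_L2 | rewrite nth_L1 | rewrite nth3 | rewrite nth2 | rewrite nth1
  | rewrite coef_gp | rewrite coef_Bp | rewrite (@coef_Hp _ hb _ hs)
  | progress rewrite /V /uw /= ].

Ltac kill_oob s hs := repeat match goal with |- context [nth 0 s ?i] =>
  rewrite (@nth_default _ 0 s i); [| rewrite hs; lia] end.

Ltac unify_nth s := repeat match goal with |- context [nth 0 s ?i] =>
  match goal with |- context [nth 0 s ?j] =>
    tryif constr_eq i j then fail else
    (let E := fresh "E" in assert (E : nth 0 s i = nth 0 s j) by (congr (nth _ _ _); lia);
     rewrite E; clear E) end end.

Ltac enum s := repeat match goal with |- context [nth 0 s ?i] =>
  let x := fresh "x" in set x := nth 0 s i; clearbody x; case: (F2c x) => -> end;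
  by apply: val_inj.

Section Main.
Variables (b : nat) (hb : (2 <= b)%N) (s : seq 'F_2) (hs : size s = (4*b+1)%N).

Lemma core k : (k < 2*b+1)%N ->
  nth 0 (W3 b s) (outw b k) = nth 0 s k + (Hp b s * gp b)`_k + (Bp b s * gp b)`_k.
Proof.
move=> hk; rewrite /outw.
have : k = 0%N \/ (1 <= k < b-1)%N \/ k = (b-1)%N \/ k = b \/ (b < k < 2*b-1)%N \/ k = (2*b-1)%N \/ k = (2*b)%N by lia.
case=> [->|[/andP[k1 k2]|[->|[->|[/andP[k1 k2]|[->|->]]]]]].
all: expand hb hs; kill_oob s hs; unify_nth s.
all: enum s.
Qed.
End Main.


Lemma sum_tuple_poly N (t : N.-tuple 'F_2) :
  \sum_(i < N) tnth t i *: 'X^i = \poly_(i < N) nth 0 t i.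
Proof. by rewrite poly_def; apply: eq_bigr => i _; rewrite (tnth_nth 0). Qed.

Theorem theorem1 (b : nat) (hb : (2 <= b)%N) :
  let m := (2 * b + 1)%N in
  exists P : slp,
    [/\ slp_wf (2 * m - 1) P,
        slp_xors P = (6 * b + 1)%N,
        slp_depth (2 * m - 1) P = 3%N,
        size (slp_outs P) = m &
        forall d : (2 * m - 1).-tuple 'F_2,
          let D : {poly 'F_2} := \sum_(i < 2 * m - 1) tnth d i *: 'X^i in
          forall k : 'I_m, slp_out P d k = (D %% pentanomial b)`_k].
Proof.
move=> m; exists (P b).
have eN : (2 * m - 1 = 4*b+1)%N by rewrite /m; lia.
split.
- rewrite eN; exact: wf_P.
- by rewrite /slp_xors /= size_gates.
- rewrite eN /slp_depth /= (depths_eq b hb); apply/eqP; rewrite eqn_leq; apply/andP; split.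
    by apply/bigmax_leqP_seq => o _ _; apply: (all_nth_le _ _ _ (D3_le b)).
  apply: (bigmaxn_sup_seq (10*b)%N) => //; last by rewrite (D3_r0 b hb).
  by apply/mapP; exists 0%N; [rewrite mem_iota; lia | rewrite /outw].
- by rewrite /= size_map size_iota.
- move=> d D k.
  have hs : size d = (4*b+1)%N by rewrite size_tuple.
  have hk : (k < 2*b+1)%N by exact: ltn_ord k.
  rewrite /slp_out /= (wires_eq b hb _ hs) (nth_map 0%N) ?size_iota // nth_iota // add0n.
  have eD : D = Dp b d.
    rewrite /D sum_tuple_poly /Dp; apply/polyP => i; rewrite !coef_poly.
    by have -> : (i < 2 * m - 1)%N = (i < 4*b+1)%N by rewrite eN.
  by rewrite eD (modp_Rp b hb _ hs) (coef_Rp b hb _ hs _ hk) (core b hb _ hs _ hk).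
Qed.
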